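(* Let $K\subset\mathbb R$ be compact, let $h:\mathbb R\to\mathbb R$ be a continuous increasing function with $h(0)=0$, and let $\varepsilon>0$. Then there exists a flow map $\varphi$ of the one-dimensional control system $\dot x=\theta_1x^3+\theta_2x^2$ with control $\theta=(\theta_1,\theta_2)\in\mathbb R^2$ (i.e. $\varphi\in\mathcal A_{\mathcal F}(K)$) such that $\|\varphi-h\|_{C(K)}<\varepsilon$.
   Context: Controls are piecewise constant; $\mathcal F=\{x\mapsto\theta_1x^3+\theta_2x^2:\theta\in\mathbb R^2\}$. For $g\in\mathcal F$, $\varphi^g_t$ is the time-$t$ flow of $\dot x=g(x)$. $\mathcal A_{\mathcal F}(K)$ is the set of compositions $\varphi^{f_k}_{t_k}\circ\cdots\circ\varphi^{f_1}_{t_1}$ on $K$ where, with $K_0=K$, each $t_j\ge0$ is smaller than the maximal time for which the flow of $f_j\in\mathcal F$ exists for all initial points in $K_{j-1}$, and $K_j=\varphi^{f_j}_{t_j}(K_{j-1})$. $\|\cdot\|_{C(K)}$ is the supremum norm on $K$. *)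

(* Defs.v *)
From Stdlib Require Import Reals.
From Coquelicot Require Import Coquelicot.
Open Scope R_scope.

Definition fam (theta1 theta2 : R) (x : R) : R := theta1 * x ^ 3 + theta2 * x ^ 2.

Definition is_solution (g : R -> R) (x0 T : R) (sol : R -> R) : Prop :=
  sol 0 = x0 /\
  (forall s, 0 <= s <= T -> continuity_pt sol s) /\
  (forall s, 0 < s < T -> is_derive sol s (g (sol s))).

Definition flow_exists_on (g : R -> R) (S : R -> Prop) (T : R) : Prop :=
  forall x, S x -> exists sol, is_solution g x T sol.

Definition admissible_time (g : R -> R) (S : R -> Prop) (t : R) : Prop :=
  0 <= t /\ exists T, t < T /\ flow_exists_on g S T.

Definition is_flow_value (g : R -> R) (x t y : R) : Prop :=
  exists sol, is_solution g x t sol /\ sol t = y.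

Inductive in_AF (K : R -> Prop) : (R -> R) -> Prop :=
| AF_id : in_AF K (fun x => x)
| AF_step (phi psi : R -> R) (theta1 theta2 t : R) :
    in_AF K phi ->
    admissible_time (fam theta1 theta2) (fun y => exists x, K x /\ y = phi x) t ->
    (forall x, K x -> is_flow_value (fam theta1 theta2) (phi x) t (psi x)) ->
    in_AF K psi.

(* Main.v *)
Require Import Defs.
From Stdlib Require Import Reals.
From Coquelicot Require Import Coquelicot.
From Stdlib Require Import Lra Psatz List.
Import ListNotations.
Open Scope R_scope.


Inductive op := OA (s : R) | OB (c : R).
Definition lin (o : op) (x : R) : R :=
  match o with OA s => s * x | OB c => c * x^2 end.
Definition app (o : op) (x : R) : R :=
  match o with OA s => x / (1 - s * x) | OB c => x / sqrt (1 - c * x^2) end.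
Definition cnd (o : op) (x : R) : Prop := lin o x < 1.
Fixpoint ev (l : list op) (x : R) : R :=
  match l with nil => x | o :: l' => app o (ev l' x) end.
Fixpoint vd (l : list op) (x : R) : Prop :=
  match l with nil => True | o :: l' => vd l' x /\ cnd o (ev l' x) end.
Definition th1 (o : op) := match o with OA _ => 0 | OB c => c/2 end.
Definition th2 (o : op) := match o with OA s => s | OB _ => 0 end.
Definition solf (o : op) (y t : R) : R :=
  match o with OA s => y / (1 - s * t * y) | OB c => y / sqrt (1 - c * t * y^2) end.

Lemma derA (s y t : R) : 0 < 1 - s * t * y ->
  is_derive (fun u => y / (1 - s * u * y)) t (fam 0 s (y / (1 - s * t * y))).
Proof.
  intro H. unfold fam. auto_derive.
  - lra.
  - field. lra.
Qed.

Lemma derB (c y t : R) : 0 < 1 - c * t * y^2 ->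
  is_derive (fun u => y / sqrt (1 - c * u * y^2)) t (fam (c/2) 0 (y / sqrt (1 - c * t * y^2))).
Proof.
  intro H. unfold fam. auto_derive.
  - split; [lra|]. split; [|exact I]. apply Rgt_not_eq. apply sqrt_lt_R0. lra.
  - replace (1 + - (c * t * (y * (y * 1)))) with (1 - c*t*y^2) by ring.
    set (S := sqrt (1 - c*t*y^2)).
    assert (HS0 : 0 < S) by (apply sqrt_lt_R0; lra).
    field. lra.
Qed.

Lemma cont_of_der (f : R -> R) x : ex_derive f x -> continuity_pt f x.
Proof.
  intro H. apply continuity_pt_filterlim. apply (ex_derive_continuous f x H).
Qed.

Lemma solf_der o y t : t * lin o y < 1 ->
  is_derive (solf o y) t (fam (th1 o) (th2 o) (solf o y t)).
Proof.
  destruct o as [s|c]; simpl; intro H.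
  - apply derA. lra.
  - apply derB. lra.
Qed.

Lemma solf_sol o y T : 0 <= T -> T * lin o y < 1 ->
  is_solution (fam (th1 o) (th2 o)) y T (solf o y).
Proof.
  intros HT H.
  assert (Hall : forall t, 0 <= t <= T -> t * lin o y < 1).
  { intros t Ht. destruct (Rle_lt_dec (lin o y) 0).
    - nra.
    - nra. }
  split; [|split].
  - destruct o; simpl.
    + replace (1 - s * 0 * y) with 1 by ring. field.
    + replace (1 - c * 0 * (y * (y * 1))) with 1 by ring. rewrite sqrt_1. field.
  - intros t Ht. apply cont_of_der. eexists. apply solf_der. apply Hall. exact Ht.
  - intros t Ht. apply solf_der. apply Hall. lra.
Qed.

Lemma solf_1 o y : solf o y 1 = app o y.
Proof.
  destruct o; unfold solf, app.
  - replace (s * 1 * y) with (s * y) by ring. reflexivity.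
  - replace (c * 1 * y^2) with (c * y^2) by ring. reflexivity.
Qed.

Lemma app_strict o a b : cnd o a -> cnd o b -> a < b -> app o a < app o b.
Proof.
  unfold cnd; destruct o as [s|c]; unfold lin, app; intros Ha Hb Hab.
  - unfold Rdiv. apply (Rmult_lt_reg_r ((1 - s*a) * (1 - s*b))). nra.
    replace (a * / (1 - s * a) * ((1 - s * a) * (1 - s * b))) with (a * (1 - s*b)) by (field; lra).
    replace (b * / (1 - s * b) * ((1 - s * a) * (1 - s * b))) with (b * (1 - s*a)) by (field; lra).
    nra.
  - set (A := sqrt (1 - c * a^2)). set (B := sqrt (1 - c * b^2)).
    assert (HA : 0 < A) by (apply sqrt_lt_R0; lra).
    assert (HB : 0 < B) by (apply sqrt_lt_R0; lra).
    assert (HA2 : A * A = 1 - c * a^2) by (apply sqrt_sqrt; lra).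
    assert (HB2 : B * B = 1 - c * b^2) by (apply sqrt_sqrt; lra).
    unfold Rdiv. apply (Rmult_lt_reg_r (A * B)). nra.
    replace (a * / A * (A * B)) with (a * B) by (field; lra).
    replace (b * / B * (A * B)) with (b * A) by (field; lra).
    destruct (Rle_lt_dec a 0); destruct (Rle_lt_dec b 0).
    +
      assert (E : a * a * (B*B) - b * b * (A*A) = a*a - b*b) by (rewrite HA2, HB2; ring).
      assert (a*a - b*b > 0) by nra.
      assert (X : (a*B)*(a*B) > (b*A)*(b*A)) by (replace ((a*B)*(a*B)) with (a*a*(B*B)) by ring; replace ((b*A)*(b*A)) with (b*b*(A*A)) by ring; lra).
      assert (Y1 : a * B <= 0) by nra. assert (Y2 : b*A <= 0) by nra. revert X Y1 Y2. generalize (a*B) (b*A). intros P Q X Y1 Y2. nra.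
    + nra.
    + lra.
    + assert (E : a * a * (B*B) - b * b * (A*A) = a*a - b*b) by (rewrite HA2, HB2; ring).
      assert (a*a - b*b < 0) by nra.
      assert (X : (a*B)*(a*B) < (b*A)*(b*A)) by (replace ((a*B)*(a*B)) with (a*a*(B*B)) by ring; replace ((b*A)*(b*A)) with (b*b*(A*A)) by ring; lra).
      assert (Y1 : 0 < a * B) by nra. assert (Y2 : 0 < b*A) by nra. revert X Y1 Y2. generalize (a*B) (b*A). intros P Q X Y1 Y2. nra.
Qed.

Lemma app_0 o : app o 0 = 0.
Proof. destruct o; simpl; unfold Rdiv; ring. Qed.

Lemma cnd_0 o : cnd o 0.
Proof. unfold cnd; destruct o; simpl; lra. Qed.

Lemma lin_between o a y b : a <= y <= b -> lin o y <= Rmax 0 (Rmax (lin o a) (lin o b)).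
Proof.
  intros H. destruct o as [s|c]; unfold lin.
  - destruct (Rle_lt_dec s 0).
    + assert (s * y <= s * a) by nra. 
      apply Rle_trans with (s*a); [lra|]. 
      apply Rle_trans with (Rmax (s*a) (s*b)); [apply Rmax_l|apply Rmax_r].
    + assert (s * y <= s * b) by nra.
      apply Rle_trans with (s*b); [lra|].
      apply Rle_trans with (Rmax (s*a) (s*b)); [apply Rmax_r|apply Rmax_r].
  - destruct (Rle_lt_dec c 0).
    + apply Rle_trans with 0; [nra|apply Rmax_l].
    + destruct (Rle_lt_dec (a^2) (b^2)).
      * assert (y^2 <= b^2) by (destruct (Rle_lt_dec 0 y); nra).
        assert (c * y^2 <= c * b^2) by nra.
        apply Rle_trans with (c*b^2); [lra|].
        apply Rle_trans with (Rmax (c*a^2) (c*b^2)); [apply Rmax_r|apply Rmax_r].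
      * assert (y^2 <= a^2) by (destruct (Rle_lt_dec 0 y); nra).
        assert (c * y^2 <= c * a^2) by nra.
        apply Rle_trans with (c*a^2); [lra|].
        apply Rle_trans with (Rmax (c*a^2) (c*b^2)); [apply Rmax_l|apply Rmax_r].
Qed.

Lemma cnd_between o a y b : a <= y <= b -> cnd o a -> cnd o b -> cnd o y.
Proof.
  unfold cnd; intros H Ha Hb. apply Rle_lt_trans with (Rmax 0 (Rmax (lin o a) (lin o b))).
  - apply lin_between; auto.
  - apply Rmax_lub_lt; [lra|]. apply Rmax_lub_lt; auto.
Qed.

Lemma interval l x1 y x2 : vd l x1 -> vd l x2 -> x1 <= y <= x2 ->
  vd l y /\ ev l x1 <= ev l y <= ev l x2.
Proof.
  induction l as [|o l IH]; simpl; intros H1 H2 Hy.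
  - split; auto.
  - destruct H1 as [H1 C1]; destruct H2 as [H2 C2].
    destruct (IH H1 H2 Hy) as [Hv [Ha Hb]].
    assert (Cy : cnd o (ev l y)) by (apply (cnd_between o (ev l x1) _ (ev l x2)); auto).
    split; [split; auto|].
    split.
    + destruct (Req_dec (ev l x1) (ev l y)) as [E|E]; [rewrite E; lra|].
      left. apply app_strict; auto. lra.
    + destruct (Req_dec (ev l y) (ev l x2)) as [E|E]; [rewrite E; lra|].
      left. apply app_strict; auto. lra.
Qed.

Lemma ev_0 l : ev l 0 = 0.
Proof. induction l; simpl; auto. rewrite IHl. apply app_0. Qed.

Lemma vd_0 l : vd l 0.
Proof. induction l; simpl; auto. split; auto. rewrite ev_0. apply cnd_0. Qed.

Lemma ev_strict l a b : vd l a -> vd l b -> a < b -> ev l a < ev l b.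
Proof.
  induction l as [|o l IH]; simpl; intros Ha Hb H; auto.
  destruct Ha, Hb. apply app_strict; auto.
Qed.

Lemma inAF_ev (K : R -> Prop) l x1 x2 : x1 <= x2 -> vd l x1 -> vd l x2 ->
  (forall x, K x -> x1 <= x <= x2) -> in_AF K (ev l).
Proof.
  intros H12 H1 H2 HK. induction l as [|o l IH].
  - exact (AF_id K).
  - simpl in H1, H2. destruct H1 as [H1 C1]; destruct H2 as [H2 C2].
    apply (AF_step K (ev l) (ev (o :: l)) (th1 o) (th2 o) 1).
    + apply IH; auto.
    + split; [lra|].
      set (m := Rmax 0 (Rmax (lin o (ev l x1)) (lin o (ev l x2)))).
      assert (Hm0 : 0 <= m) by apply Rmax_l.
      assert (Hm1 : m < 1).
      { apply Rmax_lub_lt; [lra|]. apply Rmax_lub_lt; auto. }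
      exists (2 / (1 + m)). split.
      * apply (Rmult_lt_reg_r (1 + m)); [lra|]. field_simplify; lra.
      * intros y [x [Kx ->]].
        exists (solf o (ev l x)). apply solf_sol.
        { apply Rlt_le. apply Rdiv_lt_0_compat; lra. }
        destruct (interval l x1 x x2 H1 H2 (HK x Kx)) as [_ Hb].
        assert (Hl : lin o (ev l x) <= m) by (apply lin_between; auto).
        apply Rle_lt_trans with (2 / (1 + m) * m).
        { destruct (Rle_lt_dec (lin o (ev l x)) 0).
          - assert (0 <= 2/(1+m) * m). { apply Rmult_le_pos; [|lra]. apply Rlt_le, Rdiv_lt_0_compat; lra. }
            assert (2/(1+m) * lin o (ev l x) <= 0). { apply Rmult_le_0_l; [|lra]. apply Rlt_le, Rdiv_lt_0_compat; lra. }
            lra.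
          - apply Rmult_le_compat_l; [apply Rlt_le, Rdiv_lt_0_compat; lra|lra]. }
        apply (Rmult_lt_reg_r (1 + m)); [lra|]. field_simplify; lra.
    + intros x Kx. exists (solf o (ev l x)). split.
      * apply solf_sol; [lra|]. simpl in *. 
        destruct (interval l x1 x x2 H1 H2 (HK x Kx)) as [Hv _].
        rewrite Rmult_1_l.
        apply (cnd_between o (ev l x1) _ (ev l x2)); auto.
        destruct (interval l x1 x x2 H1 H2 (HK x Kx)); auto.
      * rewrite solf_1. reflexivity.
Qed.


Lemma cpt_ed f x : continuity_pt f x -> forall e, 0 < e -> exists d, 0 < d /\
  forall y, Rabs (y - x) < d -> Rabs (f y - f x) < e.
Proof.
  intros H e He. destruct (H e He) as [d [Hd Hy]]. exists d. split; [lra|].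
  intros y Hyd. destruct (Req_dec y x) as [->|Hne].
  - rewrite Rminus_diag, Rabs_R0. exact He.
  - apply (Hy y). split.
    + split; [exact I| auto].
    + exact Hyd.
Qed.

Lemma op_cont o z : cnd o z -> forall e, 0 < e -> exists d, 0 < d /\
  forall w, Rabs (w - z) < d -> cnd o w /\ Rabs (app o w - app o z) < e.
Proof.
  intros Hz e He.
  assert (Cl : continuity_pt (lin o) z).
  { apply cont_of_der. destruct o; unfold lin; auto_derive; auto. }
  assert (Ca : continuity_pt (app o) z).
  { apply cont_of_der. unfold cnd, lin in Hz. destruct o as [s|c]; unfold app; auto_derive.
    - lra.
    - split; [lra|]. split; [|exact I]. apply Rgt_not_eq. apply sqrt_lt_R0. lra. }
  destruct (cpt_ed _ _ Cl (1 - lin o z)) as [d1 [Hd1 H1]]. { unfold cnd in Hz; lra. }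
  destruct (cpt_ed _ _ Ca e He) as [d2 [Hd2 H2]].
  exists (Rmin d1 d2). split; [apply Rmin_pos; auto|].
  intros w Hw. split.
  - unfold cnd. assert (Rabs (lin o w - lin o z) < 1 - lin o z).
    { apply H1. apply Rlt_le_trans with (Rmin d1 d2); auto. apply Rmin_l. }
    apply Rabs_def2 in H. lra.
  - apply H2. apply Rlt_le_trans with (Rmin d1 d2); auto. apply Rmin_r.
Qed.

Lemma ev_cont l x : vd l x -> forall e, 0 < e -> exists d, 0 < d /\
  forall y, Rabs (y - x) < d -> vd l y /\ Rabs (ev l y - ev l x) < e.
Proof.
  induction l as [|o l IH]; simpl; intros Hx e He.
  - exists e. split; auto.
  - destruct Hx as [Hx Co].
    destruct (op_cont o (ev l x) Co e He) as [d1 [Hd1 H1]].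
    destruct (IH Hx d1 Hd1) as [d2 [Hd2 H2]].
    exists d2. split; auto. intros y Hy.
    destruct (H2 y Hy) as [Vy Ey]. destruct (H1 (ev l y) Ey) as [C E].
    split; [split|]; auto.
Qed.

Definition U (l : list op) (u : R) : R := / ev l (/ u).

Lemma ev_app l1 l2 x : ev (l1 ++ l2) x = ev l1 (ev l2 x).
Proof. induction l1; simpl; auto. rewrite IHl1. auto. Qed.

Lemma vd_app l1 l2 x : vd (l1 ++ l2) x <-> vd l2 x /\ vd l1 (ev l2 x).
Proof.
  induction l1 as [|o l1 IH]; simpl.
  - tauto.
  - rewrite IH, ev_app. tauto.
Qed.

Lemma U_app l1 l2 u : U (l1 ++ l2) u = U l1 (U l2 u).
Proof. unfold U. rewrite ev_app, Rinv_inv. reflexivity. Qed.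

Lemma vd_app_U l1 l2 u : vd l2 (/ u) -> vd l1 (/ U l2 u) -> vd (l1 ++ l2) (/ u).
Proof. intros H1 H2. apply vd_app. split; auto. unfold U in H2. rewrite Rinv_inv in H2. auto. Qed.

Lemma vd_app_U_inv l1 l2 u : vd (l1 ++ l2) (/ u) -> vd l2 (/ u) /\ vd l1 (/ U l2 u).
Proof. intros H. apply vd_app in H. unfold U. rewrite Rinv_inv. auto. Qed.

Lemma ev_pos l x : vd l x -> 0 < x -> 0 < ev l x.
Proof. intros H Hx. rewrite <- (ev_0 l). apply ev_strict; auto. apply vd_0. Qed.
Lemma ev_neg l x : vd l x -> x < 0 -> ev l x < 0.
Proof. intros H Hx. rewrite <- (ev_0 l). apply ev_strict; auto. apply vd_0. Qed.

Lemma U_pos l u : 0 < u -> vd l (/ u) -> 0 < U l u.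
Proof. intros Hu H. unfold U. apply Rinv_0_lt_compat. apply ev_pos; auto. apply Rinv_0_lt_compat; auto. Qed.

Lemma U_neg l u : u < 0 -> vd l (/ u) -> U l u < 0.
Proof. intros Hu H. unfold U. apply Rinv_lt_0_compat. apply ev_neg; auto. apply Rinv_lt_0_compat; auto. Qed.

Lemma U_mono_pos l u v : 0 < u -> u < v -> vd l (/ u) -> vd l (/ v) /\ U l u < U l v.
Proof.
  intros Hu Huv H.
  assert (Hv : 0 < v) by lra.
  assert (Hi : / v < / u) by (apply Rinv_lt_contravar; nra).
  assert (Hvv : vd l (/ v)).
  { destruct (interval l 0 (/ v) (/ u) (vd_0 l) H) as [A _]; auto.
    split; [left; apply Rinv_0_lt_compat; auto|lra]. }
  split; auto. unfold U. apply Rinv_lt_contravar.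
  - apply Rmult_lt_0_compat; apply ev_pos; auto; apply Rinv_0_lt_compat; auto.
  - apply ev_strict; auto.
Qed.

Lemma U_mono_neg l u v : v < u -> u < 0 -> vd l (/ u) -> vd l (/ v) /\ U l v < U l u.
Proof.
  intros Hvu Hu H.
  assert (Hv : v < 0) by lra.
  assert (Hi : / u < / v).
  { apply Ropp_lt_cancel. rewrite <- !Rinv_opp. apply Rinv_lt_contravar; nra. }
  assert (Hvv : vd l (/ v)).
  { destruct (interval l (/ u) (/ v) 0 H (vd_0 l)) as [A _]; auto.
    split; [lra|left; apply Rinv_lt_0_compat; auto]. }
  split; auto. unfold U.
  assert (E1 : ev l (/ u) < 0) by (apply ev_neg; auto; apply Rinv_lt_0_compat; auto).
  assert (E2 : ev l (/ v) < 0) by (apply ev_neg; auto; apply Rinv_lt_0_compat; auto).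
  assert (E3 : ev l (/ u) < ev l (/ v)) by (apply ev_strict; auto).
  apply Ropp_lt_cancel. rewrite <- !Rinv_opp. apply Rinv_lt_contravar; nra.
Qed.

Lemma inv_cont u : u <> 0 -> forall e, 0 < e -> exists d, 0 < d /\
  forall v, Rabs (v - u) < d -> v <> 0 /\ Rabs (/ v - / u) < e.
Proof.
  intros Hu e He.
  assert (Hau : 0 < Rabs u) by (apply Rabs_pos_lt; auto).
  exists (Rmin (Rabs u / 2) (e * (Rabs u)^2 / 2)). split.
  { apply Rmin_pos; [lra|]. apply Rmult_lt_0_compat; [|lra]. apply Rmult_lt_0_compat; [lra|]. nra. }
  intros v Hv.
  assert (H1 : Rabs (v - u) < Rabs u / 2) by (apply Rlt_le_trans with (1 := Hv); apply Rmin_l).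
  assert (H2 : Rabs (v - u) < e * (Rabs u)^2 / 2) by (apply Rlt_le_trans with (1 := Hv); apply Rmin_r).
  assert (Hav : Rabs u / 2 < Rabs v).
  { assert (Rabs u <= Rabs v + Rabs (v - u)).
    { replace u with (v - (v - u)) at 1 by ring. 
      eapply Rle_trans; [apply Rabs_triang|]. rewrite Rabs_Ropp. lra. }
    lra. }
  assert (Hv0 : v <> 0) by (intro E; rewrite E, Rabs_R0 in Hav; lra).
  split; auto.
  replace (/ v - / u) with ((u - v) / (u * v)) by (field; auto).
  unfold Rdiv. rewrite Rabs_mult, Rabs_inv, Rabs_mult.
  rewrite <- Rabs_Ropp. replace (- (u - v)) with (v - u) by ring.
  apply Rlt_le_trans with ((e * Rabs u ^ 2 / 2) * / (Rabs u * Rabs v)).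
  { apply Rmult_lt_compat_r; auto. apply Rinv_0_lt_compat. nra. }
  apply (Rmult_le_reg_r (Rabs u * Rabs v)). nra.
  field_simplify; try nra.
  assert (0 <= e * Rabs u * (Rabs v - Rabs u / 2)) by (apply Rmult_le_pos; [apply Rmult_le_pos|]; lra).
  nra.
Qed.

Lemma U_cont l u : u <> 0 -> vd l (/ u) -> forall e, 0 < e -> exists d, 0 < d /\
  forall v, Rabs (v - u) < d -> vd l (/ v) /\ Rabs (U l v - U l u) < e.
Proof.
  intros Hu H e He.
  assert (Hx : / u <> 0) by (apply Rinv_neq_0_compat; auto).
  assert (HE : ev l (/ u) <> 0).
  { destruct (Rlt_or_le 0 (/ u)).
    - apply Rgt_not_eq. apply ev_pos; auto.
    - apply Rlt_not_eq. apply ev_neg; auto. lra. }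
  destruct (inv_cont _ HE e He) as [d1 [Hd1 H1]].
  destruct (ev_cont l (/ u) H d1 Hd1) as [d2 [Hd2 H2]].
  destruct (inv_cont _ Hu d2 Hd2) as [d3 [Hd3 H3]].
  exists d3. split; auto. intros v Hv.
  destruct (H3 v Hv) as [Hv0 Hv1].
  destruct (H2 (/ v) Hv1) as [Vv Ev].
  split; auto. unfold U. destruct (H1 _ Ev) as [_ R]. exact R.
Qed.


Definition mop (o : op) : op := match o with OA s => OA (- s) | OB c => OB c end.
Definition mir (l : list op) : list op := map mop l.

Lemma app_mop o z : app (mop o) (- z) = - app o z.
Proof.
  destruct o; unfold mop, app.
  - replace (1 - - s * - z) with (1 - s * z) by ring. unfold Rdiv; ring.
  - replace ((- z)^2) with (z^2) by ring. unfold Rdiv. ring.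
Qed.

Lemma lin_mop o z : lin (mop o) (- z) = lin o z.
Proof. destruct o; unfold mop, lin; ring. Qed.

Lemma ev_mir l x : ev (mir l) x = - ev l (- x).
Proof.
  induction l as [|o l IH]; simpl.
  - ring.
  - rewrite IH. rewrite app_mop. reflexivity.
Qed.

Lemma vd_mir l x : vd (mir l) x <-> vd l (- x).
Proof.
  induction l as [|o l IH]; simpl.
  - tauto.
  - rewrite IH. unfold cnd. rewrite ev_mir. rewrite lin_mop. tauto.
Qed.

Lemma U_mir l u : U (mir l) u = - U l (- u).
Proof. unfold U. rewrite ev_mir, Rinv_opp, Rinv_opp. reflexivity. Qed.

Lemma vd_mir_inv l u : vd l (/ (- u)) -> vd (mir l) (/ u).
Proof. intro H. apply vd_mir. rewrite <- Rinv_opp. auto. Qed.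

Definition vort (sg c : R) : list op := [OA (- sg); OB (- c); OA sg].

Lemma sqrt_sq_eq W a : 0 <= a -> a * a = W -> sqrt W = a.
Proof. intros Ha E. rewrite <- E. apply sqrt_square. auto. Qed.

Lemma vort_pos sg c y : 0 < sg -> sg < y -> 0 < (y - sg)^2 + c ->
  vd (vort sg c) (/ y) /\ U (vort sg c) y = sg + sqrt ((y - sg)^2 + c).
Proof.
  intros Hs Hy HW.
  set (W := (y - sg)^2 + c) in *.
  assert (Hw : 0 < sqrt W) by (apply sqrt_lt_R0; auto).
  assert (Hw2 : sqrt W * sqrt W = W) by (apply sqrt_sqrt; lra).
  set (w := sqrt W) in *.
  assert (Hy0 : 0 < y) by lra.
  assert (E1 : app (OA sg) (/ y) = / (y - sg)).
  { unfold app. field. split; lra. }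
  assert (C1 : cnd (OA sg) (/ y)).
  { unfold cnd, lin. apply (Rmult_lt_reg_r y); auto. rewrite Rmult_assoc, Rinv_l by lra. lra. }
  set (z := / (y - sg)).
  assert (Hz : 0 < z) by (apply Rinv_0_lt_compat; lra).
  assert (C2 : cnd (OB (- c)) z).
  { unfold cnd, lin. unfold z. apply (Rmult_lt_reg_r ((y - sg)^2)). nra.
    field_simplify; [|lra]. unfold W in HW. lra. }
  assert (E2 : app (OB (- c)) z = / w).
  { unfold app. rewrite (sqrt_sq_eq _ (w * z)).
    - field. lra.
    - nra.
    - unfold z. replace (w * / (y - sg) * (w * / (y - sg))) with ((w * w) / (y-sg)^2) by (field; lra).
      rewrite Hw2. unfold W. field. lra. }
  assert (C3 : cnd (OA (- sg)) (/ w)).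
  { unfold cnd, lin. assert (0 < / w) by (apply Rinv_0_lt_compat; auto). nra. }
  assert (E3 : app (OA (- sg)) (/ w) = / (sg + w)).
  { unfold app. field. lra. }
  split.
  - unfold vort. cbn [vd ev]. rewrite E1. fold z. rewrite E2. repeat split; auto.
  - unfold U, vort. cbn [vd ev]. rewrite E1. fold z. rewrite E2, E3. apply Rinv_inv.
Qed.

Lemma vort_neg sg c y : 0 < sg -> y < 0 -> sg^2 < (sg - y)^2 + c ->
  vd (vort sg c) (/ y) /\ U (vort sg c) y = sg - sqrt ((sg - y)^2 + c).
Proof.
  intros Hs Hy HW.
  set (W := (sg - y)^2 + c) in *.
  assert (HW0 : 0 < W) by nra.
  assert (Hw : 0 < sqrt W) by (apply sqrt_lt_R0; auto).
  assert (Hw2 : sqrt W * sqrt W = W) by (apply sqrt_sqrt; lra).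
  set (w := sqrt W) in *.
  assert (Hws : sg < w) by nra.
  assert (E1 : app (OA sg) (/ y) = / (y - sg)).
  { unfold app. field. split; lra. }
  assert (C1 : cnd (OA sg) (/ y)).
  { unfold cnd, lin. assert (/ y < 0) by (apply Rinv_lt_0_compat; auto). nra. }
  set (z := / (y - sg)).
  assert (Hz : z < 0) by (apply Rinv_lt_0_compat; lra).
  assert (C2 : cnd (OB (- c)) z).
  { unfold cnd, lin. unfold z. apply (Rmult_lt_reg_r ((y - sg)^2)). nra.
    field_simplify; [|lra]. unfold W in HW0. nra. }
  assert (E2 : app (OB (- c)) z = - / w).
  { unfold app. rewrite (sqrt_sq_eq _ (w * (- z))).
    - field. lra.
    - nra.
    - unfold z. replace (w * - / (y - sg) * (w * - / (y - sg))) with ((w * w) / (y-sg)^2) by (field; lra).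
      rewrite Hw2. unfold W. field. lra. }
  assert (C3 : cnd (OA (- sg)) (- / w)).
  { unfold cnd, lin. apply (Rmult_lt_reg_r w); auto. field_simplify; lra. }
  assert (E3 : app (OA (- sg)) (- / w) = / (sg - w)).
  { unfold app. field. lra. }
  split.
  - unfold vort. cbn [vd ev]. rewrite E1. fold z. rewrite E2. repeat split; auto.
  - unfold U, vort. cbn [vd ev]. rewrite E1. fold z. rewrite E2, E3. apply Rinv_inv.
Qed.

Lemma disp_pos sg c y : sg < y -> 0 <= (y - sg)^2 + c ->
  Rabs (sg + sqrt ((y - sg)^2 + c) - y) <= Rabs c / (y - sg).
Proof.
  intros Hy HW. set (a := y - sg) in *. set (s := sqrt (a^2 + c)) in *.
  assert (Hs : 0 <= s) by apply sqrt_pos.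
  assert (Hs2 : s * s = a^2 + c) by (apply sqrt_sqrt; auto).
  replace (sg + s - y) with (s - a) by (unfold a; ring).
  assert (Ha : 0 < a) by (unfold a; lra).
  replace (s - a) with ((s*s - a^2) / (s + a)) by (field; lra).
  rewrite Hs2. replace (a^2 + c - a^2) with c by ring.
  unfold Rdiv. rewrite Rabs_mult. rewrite (Rabs_pos_eq (/ (s + a))) by (left; apply Rinv_0_lt_compat; lra).
  apply Rmult_le_compat_l; [apply Rabs_pos|]. apply Rinv_le_contravar; lra.
Qed.

Lemma disp_neg sg c y : y < sg -> 0 <= (sg - y)^2 + c ->
  Rabs (sg - sqrt ((sg - y)^2 + c) - y) <= Rabs c / (sg - y).
Proof.
  intros Hy HW. set (a := sg - y) in *. set (s := sqrt (a^2 + c)) in *.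
  assert (Hs : 0 <= s) by apply sqrt_pos.
  assert (Hs2 : s * s = a^2 + c) by (apply sqrt_sqrt; auto).
  replace (sg - s - y) with (- (s - a)) by (unfold a; ring).
  rewrite Rabs_Ropp.
  assert (Ha : 0 < a) by (unfold a; lra).
  replace (s - a) with ((s*s - a^2) / (s + a)) by (field; lra).
  rewrite Hs2. replace (a^2 + c - a^2) with c by ring.
  unfold Rdiv. rewrite Rabs_mult. rewrite (Rabs_pos_eq (/ (s + a))) by (left; apply Rinv_0_lt_compat; lra).
  apply Rmult_le_compat_l; [apply Rabs_pos|]. apply Rinv_le_contravar; lra.
Qed.


Lemma Rabs_def2b x a : Rabs x <= a -> - a <= x <= a.
Proof. unfold Rabs. destruct (Rcase_abs x); lra. Qed.

Fixpoint itl (sg c : nat -> R) (k : nat) : list op :=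
  match k with O => [] | S k => vort (sg k) (c k) ++ itl sg c k end.

Lemma iter_gen (sg c pk : nat -> R) (N : nat) (Q g al rho s0 C : R) :
  0 < s0 -> 0 < g -> 0 < al -> 0 <= C ->
  (forall k, (k < N)%nat -> s0 <= sg k /\ sg k < pk k /\ 0 < (pk k - sg k)^2 + c k /\
       sg k + sqrt ((pk k - sg k)^2 + c k) = pk (S k) /\ Rabs (c k) <= C /\ pk k <= Q) ->
  C < g^2/4 -> C < al^2/4 ->
  INR N * (2 * C / g) <= rho -> INR N * (2 * C / g) <= g / 2 ->
  INR N * (C / s0) <= rho -> INR N * (C / s0) <= al / 2 ->
  forall k, (k <= N)%nat ->
  vd (itl sg c k) (/ pk O) /\ U (itl sg c k) (pk O) = pk k /\
  (forall y, Q + g <= y -> vd (itl sg c k) (/ y) /\ Rabs (U (itl sg c k) y - y) <= INR k * (2 * C / g)) /\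
  (forall y, y <= - al -> vd (itl sg c k) (/ y) /\ Rabs (U (itl sg c k) y - y) <= INR k * (C / s0)).
Proof.
  intros Hs0 Hg Hal HC0 Hk HC1 HC2 HB1 HB2 HB3 HB4.
  induction k as [|k IH]; intros HkN.
  - cbn [itl]. unfold U. cbn [ev vd]. rewrite !Rinv_inv. split; [exact I|split; [reflexivity|split]].
    + intros y0 _. split; [exact I|]. rewrite Rinv_inv, Rminus_diag, Rabs_R0. simpl. lra.
    + intros y0 _. split; [exact I|]. rewrite Rinv_inv, Rminus_diag, Rabs_R0. simpl. lra.
  - destruct (IH ltac:(lia)) as (V0 & E0 & Hp & Hn).
    destruct (Hk k ltac:(lia)) as (Hs & Hsp & HW & Hnext & Hc & HQ).
    assert (INk : INR k <= INR N) by (apply le_INR; lia).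
    assert (INS : INR (S k) <= INR N) by (apply le_INR; lia).
    rewrite S_INR in INS |- *.
    assert (Hsg0 : 0 < sg k) by lra.
    assert (Hc2 : 0 <= 2 * C / g) by (apply Rmult_le_pos; [lra|left; apply Rinv_0_lt_compat; lra]).
    assert (Hc3 : 0 <= C / s0) by (apply Rmult_le_pos; [lra|left; apply Rinv_0_lt_compat; lra]).
    cbn [itl]. split; [|split; [|split]].
    + apply vd_app_U; auto. rewrite E0. apply (vort_pos (sg k) (c k) (pk k)); auto.
    + rewrite U_app, E0. rewrite (proj2 (vort_pos (sg k) (c k) (pk k) Hsg0 Hsp HW)). auto.
    + intros y Hy. destruct (Hp y Hy) as [Vy Dy].
      set (z := U (itl sg c k) y) in *.
      assert (Hz : Q + g / 2 <= z).
      { apply Rabs_def2b in Dy. assert (INR k * (2*C/g) <= g/2) by nra. lra. }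
      assert (Hzs : g / 2 <= z - sg k) by lra.
      assert (HWz : 0 < (z - sg k)^2 + c k).
      { apply Rabs_def2b in Hc. nra. }
      destruct (vort_pos (sg k) (c k) z Hsg0 ltac:(lra) HWz) as [Vz Ez].
      split; [apply vd_app_U; auto|].
      rewrite U_app. fold z. rewrite Ez.
      pose proof (disp_pos (sg k) (c k) z ltac:(lra) ltac:(lra)) as Dz.
      assert (Rabs (c k) / (z - sg k) <= 2 * C / g).
      { unfold Rdiv. apply Rle_trans with (C * / (z - sg k)).
        - apply Rmult_le_compat_r; [left; apply Rinv_0_lt_compat; lra|auto].
        - replace (2 * C * / g) with (C * / (g / 2)) by (field; lra).
          apply Rmult_le_compat_l; auto. apply Rinv_le_contravar; lra. }
      replace (sg k + sqrt ((z - sg k) ^ 2 + c k) - y) with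
        ((sg k + sqrt ((z - sg k) ^ 2 + c k) - z) + (z - y)) by ring.
      eapply Rle_trans; [apply Rabs_triang|]. nra.
    + intros y Hy. destruct (Hn y Hy) as [Vy Dy].
      set (z := U (itl sg c k) y) in *.
      assert (Hz : z <= - al / 2).
      { apply Rabs_def2b in Dy. assert (INR k * (C/s0) <= al/2) by nra. lra. }
      assert (HWz : (sg k)^2 < (sg k - z)^2 + c k).
      { apply Rabs_def2b in Hc. nra. }
      destruct (vort_neg (sg k) (c k) z Hsg0 ltac:(lra) HWz) as [Vz Ez].
      split; [apply vd_app_U; auto|].
      rewrite U_app. fold z. rewrite Ez.
      pose proof (disp_neg (sg k) (c k) z ltac:(lra) ltac:(nra)) as Dz.
      assert (Rabs (c k) / (sg k - z) <= C / s0).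
      { unfold Rdiv. apply Rle_trans with (C * / (sg k - z)).
        - apply Rmult_le_compat_r; [left; apply Rinv_0_lt_compat; lra|auto].
        - apply Rmult_le_compat_l; auto. apply Rinv_le_contravar; lra. }
      replace (sg k - sqrt ((sg k - z) ^ 2 + c k) - y) with
        ((sg k - sqrt ((sg k - z) ^ 2 + c k) - z) + (z - y)) by ring.
      eapply Rle_trans; [apply Rabs_triang|]. nra.
Qed.


Lemma small_step (d : R) (A1 B1 A2 B2 A3 B3 A4 B4 A5 B5 A6 B6 A7 B7 : R) :
  0 < d -> 0 <= A1 -> 0 < B1 -> 0 <= A2 -> 0 < B2 -> 0 <= A3 -> 0 < B3 -> 0 <= A4 -> 0 < B4 ->
  0 <= A5 -> 0 < B5 -> 0 <= A6 -> 0 < B6 -> 0 <= A7 -> 0 < B7 ->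
  exists N : nat, (0 < N)%nat /\ let dl := d / INR N in
    dl * A1 <= B1 /\ dl * A2 <= B2 /\ dl * A3 <= B3 /\ dl * A4 <= B4 /\
    dl * A5 <= B5 /\ dl * A6 <= B6 /\ dl * A7 <= B7.
Proof.
  intros Hd. intros.
  set (S := A1/B1 + A2/B2 + A3/B3 + A4/B4 + A5/B5 + A6/B6 + A7/B7).
  assert (HS : forall A B, 0 <= A -> 0 < B -> 0 <= A / B) by (intros; apply Rmult_le_pos; [lra|left; apply Rinv_0_lt_compat; lra]).
  assert (T1 := HS A1 B1 H H0). assert (T2 := HS A2 B2 H1 H2). assert (T3 := HS A3 B3 H3 H4).
  assert (T4 := HS A4 B4 H5 H6). assert (T5 := HS A5 B5 H7 H8). assert (T6 := HS A6 B6 H9 H10).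
  assert (T7 := HS A7 B7 H11 H12).
  destruct (INR_unbounded (d * S)) as [N HN].
  assert (HS0 : 0 <= S) by (unfold S; lra).
  assert (HN0 : 0 < INR N) by nra.
  exists N. split.
  { destruct N; [simpl in HN0; lra|lia]. }
  intro dl.
  assert (key : forall A B, 0 <= A -> 0 < B -> A / B <= S -> dl * A <= B).
  { intros A B HA HB HAB. unfold dl.
    assert (d * (A / B) <= INR N) by nra.
    apply (Rmult_le_reg_r (INR N / B)). apply Rdiv_lt_0_compat; lra.
    replace (d / INR N * A * (INR N / B)) with (d * (A / B)) by (field; lra).
    replace (B * (INR N / B)) with (INR N) by (field; lra). lra. }
  repeat split; apply key; auto; unfold S; lra.
Qed.

Lemma adjust_up p q g al rho : 0 < p -> p < q -> 0 < g -> 0 < al -> 0 < rho ->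
  exists l, vd l (/ p) /\ U l p = q /\
  (forall y, q + g <= y -> vd l (/ y) /\ Rabs (U l y - y) <= rho) /\
  (forall y, y <= - al -> vd l (/ y) /\ Rabs (U l y - y) <= rho).
Proof.
  intros Hp Hpq Hg Hal Hrho.
  set (d := q - p).
  destruct (small_step d (6 * d) (rho * g) (12 * d) (g^2) (6 * d) (rho * p) (12 * d) (al * p)
     4 g 4 al 2 p) as [N [HN0 (B1&B2&B3&B4&B5&B6&B7)]]; try (unfold d; nra); try lra.
  set (dl := d / INR N) in *.
  assert (HNr : 0 < INR N) by (apply lt_0_INR; auto).
  assert (Hdl : 0 < dl) by (unfold dl, d; apply Rdiv_lt_0_compat; lra).
  assert (HNd : INR N * dl = d) by (unfold dl; field; lra).
  destruct (iter_gen (fun k => p + INR k * dl - dl) (fun _ => 3 * dl^2) (fun k => p + INR k * dl) N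
     q g al rho (p/2) (3 * dl^2)) with (k := N) as (V & E & Hpos & Hneg); auto; try lra; try nra.
  - intros k Hk. assert (INR k + 1 <= INR N) by (rewrite <- S_INR; apply le_INR; lia).
    assert (0 <= INR k) by apply pos_INR.
    split; [nra|]. split; [lra|]. split; [nra|]. split.
    + rewrite (sqrt_sq_eq _ (2 * dl)) by (lra || ring). rewrite S_INR. ring.
    + split; [rewrite Rabs_pos_eq; nra|]. unfold d in HNd. nra.
  - replace (INR N * (2 * (3 * dl ^ 2) / g)) with (6 * d * dl / g) by (rewrite <- HNd; field; lra).
    apply (Rmult_le_reg_r g); auto. unfold Rdiv. rewrite Rmult_assoc, Rinv_l by lra. nra.
  - replace (INR N * (2 * (3 * dl ^ 2) / g)) with (6 * d * dl / g) by (rewrite <- HNd; field; lra).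
    apply (Rmult_le_reg_r g); auto. unfold Rdiv. rewrite Rmult_assoc, Rinv_l by lra. nra.
  - replace (INR N * (3 * dl ^ 2 / (p / 2))) with (6 * d * dl / p) by (rewrite <- HNd; field; lra).
    apply (Rmult_le_reg_r p); auto. unfold Rdiv. rewrite Rmult_assoc, Rinv_l by lra. nra.
  - replace (INR N * (3 * dl ^ 2 / (p / 2))) with (6 * d * dl / p) by (rewrite <- HNd; field; lra).
    apply (Rmult_le_reg_r p); auto. unfold Rdiv. rewrite Rmult_assoc, Rinv_l by lra. nra.
  - exists (itl (fun k => p + INR k * dl - dl) (fun _ => 3 * dl^2) N).
    cbv beta in V, E. replace (p + INR 0 * dl) with p in V, E by (simpl; ring).
    split; auto. split; [rewrite E; unfold d in HNd; lra|].
    split.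
    + intros y Hy. destruct (Hpos y Hy) as [Vy Dy]. split; auto.
      eapply Rle_trans; [exact Dy|].
      replace (INR N * (2 * (3 * dl ^ 2) / g)) with (6 * d * dl / g) by (rewrite <- HNd; field; lra).
      apply (Rmult_le_reg_r g); auto. unfold Rdiv. rewrite Rmult_assoc, Rinv_l by lra. nra.
    + intros y Hy. destruct (Hneg y Hy) as [Vy Dy]. split; auto.
      eapply Rle_trans; [exact Dy|].
      replace (INR N * (3 * dl ^ 2 / (p / 2))) with (6 * d * dl / p) by (rewrite <- HNd; field; lra).
      apply (Rmult_le_reg_r p); auto. unfold Rdiv. rewrite Rmult_assoc, Rinv_l by lra. nra.
Qed.

Lemma adjust_down p q g al rho : 0 < q -> q < p -> 0 < g -> 0 < al -> 0 < rho ->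
  exists l, vd l (/ p) /\ U l p = q /\
  (forall y, p + g <= y -> vd l (/ y) /\ Rabs (U l y - y) <= rho) /\
  (forall y, y <= - al -> vd l (/ y) /\ Rabs (U l y - y) <= rho).
Proof.
  intros Hq Hpq Hg Hal Hrho.
  set (d := p - q).
  destruct (small_step d (6 * d) (rho * g) (12 * d) (g^2) (6 * d) (rho * q) (12 * d) (al * q)
     4 g 4 al 2 q) as [N [HN0 (B1&B2&B3&B4&B5&B6&B7)]]; try (unfold d; nra); try lra.
  set (dl := d / INR N) in *.
  assert (HNr : 0 < INR N) by (apply lt_0_INR; auto).
  assert (Hdl : 0 < dl) by (unfold dl, d; apply Rdiv_lt_0_compat; lra).
  assert (HNd : INR N * dl = d) by (unfold dl; field; lra).
  destruct (iter_gen (fun k => p - INR k * dl - 2 * dl) (fun _ => - (3 * dl^2)) (fun k => p - INR k * dl) N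
     p g al rho (q/2) (3 * dl^2)) with (k := N) as (V & E & Hpos & Hneg); auto; try lra; try nra.
  - intros k Hk. assert (INR k + 1 <= INR N) by (rewrite <- S_INR; apply le_INR; lia).
    assert (0 <= INR k) by apply pos_INR.
    split; [unfold d in HNd; nra|]. split; [lra|]. split; [nra|]. split.
    + rewrite (sqrt_sq_eq _ dl) by (lra || ring). rewrite S_INR. ring.
    + split; [rewrite Rabs_Ropp, Rabs_pos_eq; nra|]. nra.
  - replace (INR N * (2 * (3 * dl ^ 2) / g)) with (6 * d * dl / g) by (rewrite <- HNd; field; lra).
    apply (Rmult_le_reg_r g); auto. unfold Rdiv. rewrite Rmult_assoc, Rinv_l by lra. nra.
  - replace (INR N * (2 * (3 * dl ^ 2) / g)) with (6 * d * dl / g) by (rewrite <- HNd; field; lra).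
    apply (Rmult_le_reg_r g); auto. unfold Rdiv. rewrite Rmult_assoc, Rinv_l by lra. nra.
  - replace (INR N * (3 * dl ^ 2 / (q / 2))) with (6 * d * dl / q) by (rewrite <- HNd; field; lra).
    apply (Rmult_le_reg_r q); auto. unfold Rdiv. rewrite Rmult_assoc, Rinv_l by lra. nra.
  - replace (INR N * (3 * dl ^ 2 / (q / 2))) with (6 * d * dl / q) by (rewrite <- HNd; field; lra).
    apply (Rmult_le_reg_r q); auto. unfold Rdiv. rewrite Rmult_assoc, Rinv_l by lra. nra.
  - exists (itl (fun k => p - INR k * dl - 2 * dl) (fun _ => - (3 * dl^2)) N).
    cbv beta in V, E. replace (p - INR 0 * dl) with p in V, E by (simpl; ring).
    split; auto. split; [rewrite E; unfold d in HNd; lra|].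
    split.
    + intros y Hy. destruct (Hpos y Hy) as [Vy Dy]. split; auto.
      eapply Rle_trans; [exact Dy|].
      replace (INR N * (2 * (3 * dl ^ 2) / g)) with (6 * d * dl / g) by (rewrite <- HNd; field; lra).
      apply (Rmult_le_reg_r g); auto. unfold Rdiv. rewrite Rmult_assoc, Rinv_l by lra. nra.
    + intros y Hy. destruct (Hneg y Hy) as [Vy Dy]. split; auto.
      eapply Rle_trans; [exact Dy|].
      replace (INR N * (3 * dl ^ 2 / (q / 2))) with (6 * d * dl / q) by (rewrite <- HNd; field; lra).
      apply (Rmult_le_reg_r q); auto. unfold Rdiv. rewrite Rmult_assoc, Rinv_l by lra. nra.
Qed.

Lemma adjust p q g al rho : 0 < p -> 0 < q -> 0 < g -> 0 < al -> 0 < rho ->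
  exists l, vd l (/ p) /\ U l p = q /\
  (forall y, Rmax p q + g <= y -> vd l (/ y) /\ Rabs (U l y - y) <= rho) /\
  (forall y, y <= - al -> vd l (/ y) /\ Rabs (U l y - y) <= rho).
Proof.
  intros Hp Hq Hg Hal Hrho.
  destruct (Rtotal_order p q) as [H|[H|H]].
  - rewrite Rmax_right by lra. apply adjust_up; auto.
  - subst q. exists nil. unfold U. cbn [vd ev]. rewrite !Rinv_inv.
    repeat split; auto; intros; rewrite Rinv_inv, Rminus_diag, Rabs_R0; lra.
  - rewrite Rmax_left by lra. apply adjust_down; auto.
Qed.

Lemma adjust_neg p q g al rho : p < 0 -> q < 0 -> 0 < g -> 0 < al -> 0 < rho ->
  exists l, vd l (/ p) /\ U l p = q /\
  (forall y, y <= Rmin p q - g -> vd l (/ y) /\ Rabs (U l y - y) <= rho) /\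
  (forall y, al <= y -> vd l (/ y) /\ Rabs (U l y - y) <= rho).
Proof.
  intros Hp Hq Hg Hal Hrho.
  destruct (adjust (- p) (- q) g al rho) as (l & V & E & Hpos & Hneg); try lra.
  exists (mir l). split; [|split; [|split]].
  - apply vd_mir_inv. auto.
  - rewrite U_mir, E. ring.
  - intros y Hy. assert (Rmax (- p) (- q) + g <= - y).
    { unfold Rmax, Rmin in *. destruct (Rle_dec (-p) (-q)); destruct (Rle_dec p q); lra. }
    destruct (Hpos (- y) H) as [Vy Dy]. split; [apply vd_mir_inv; auto|].
    rewrite U_mir. replace (- U l (- y) - y) with (- (U l (- y) - - y)) by ring. rewrite Rabs_Ropp. auto.
  - intros y Hy. destruct (Hneg (- y) ltac:(lra)) as [Vy Dy]. split; [apply vd_mir_inv; auto|].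
    rewrite U_mir. replace (- U l (- y) - y) with (- (U l (- y) - - y)) by ring. rewrite Rabs_Ropp. auto.
Qed.


Lemma chain_le (f : nat -> R) n : (forall i, (i < n)%nat -> f i < f (S i)) ->
  forall i j, (i <= j)%nat -> (j <= n)%nat -> f i <= f j.
Proof.
  intros H i j Hij. induction Hij as [|j Hij IH]; intros Hj.
  - lra.
  - assert (f j < f (S j)) by (apply H; lia). assert (f i <= f j) by (apply IH; lia). lra.
Qed.

Lemma chain_le_dec (f : nat -> R) n : (forall i, (i < n)%nat -> f (S i) < f i) ->
  forall i j, (i <= j)%nat -> (j <= n)%nat -> f j <= f i.
Proof.
  intros H i j Hij Hj. pose proof (chain_le (fun k => - f k) n) as C.
  assert (- f i <= - f j). { apply C; auto. intros k Hk. specialize (H k Hk). lra. }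
  lra.
Qed.

Lemma fin_min (n : nat) (P : nat -> R -> Prop) :
  (forall i d d', P i d -> 0 < d' <= d -> P i d') ->
  (forall i, (i <= n)%nat -> exists d, 0 < d /\ P i d) ->
  exists d, 0 < d /\ forall i, (i <= n)%nat -> P i d.
Proof.
  intros Hm. induction n as [|n IH]; intros H.
  - destruct (H O (le_n _)) as [d [Hd Pd]]. exists d. split; auto.
    intros i Hi. assert (i = O) by lia. subst. auto.
  - destruct IH as [d1 [Hd1 P1]]. { intros i Hi. apply H. lia. }
    destruct (H (S n) (le_n _)) as [d2 [Hd2 P2]].
    exists (Rmin d1 d2). split; [apply Rmin_pos; auto|].
    intros i Hi. destruct (Nat.eq_dec i (S n)) as [->|Hne].
    + apply (Hm _ d2); auto. split; [apply Rmin_pos; auto|apply Rmin_r].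
    + apply (Hm _ d1); [apply P1; lia|]. split; [apply Rmin_pos; auto|apply Rmin_l].
Qed.

Lemma U_mono_pos_le l u v : 0 < u -> u <= v -> vd l (/ u) -> vd l (/ v) /\ U l u <= U l v.
Proof.
  intros Hu Huv H. destruct (Req_dec u v) as [<-|Hne].
  - split; auto. lra.
  - destruct (U_mono_pos l u v Hu ltac:(lra) H). split; auto. lra.
Qed.

Lemma U_mono_neg_le l u v : v <= u -> u < 0 -> vd l (/ u) -> vd l (/ v) /\ U l v <= U l u.
Proof.
  intros Hvu Hu H. destruct (Req_dec u v) as [<-|Hne].
  - split; auto. lra.
  - destruct (U_mono_neg l u v ltac:(lra) Hu H). split; auto. lra.
Qed.

Definition Cl (n m : nat) : Prop := forall (b tb a ta : nat -> R) (eta : R),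
  0 < b O -> (forall i, (i < n)%nat -> b i < b (S i)) ->
  0 < tb O -> (forall i, (i < n)%nat -> tb i < tb (S i)) ->
  a O < 0 -> (forall j, (j < m)%nat -> a (S j) < a j) ->
  ta O < 0 -> (forall j, (j < m)%nat -> ta (S j) < ta j) -> 0 < eta ->
  exists l, vd l (/ b O) /\ vd l (/ a O) /\
   (forall i, (i <= n)%nat -> Rabs (U l (b i) - tb i) < eta) /\
   (forall j, (j <= m)%nat -> Rabs (U l (a j) - ta j) < eta).

Lemma Cl_sym n m : Cl m n -> Cl n m.
Proof.
  intros H b tb a ta eta Hb0 Hb Htb0 Htb Ha0 Ha Hta0 Hta Heta.
  destruct (H (fun j => - a j) (fun j => - ta j) (fun i => - b i) (fun i => - tb i) eta)
    as (l & V1 & V2 & E1 & E2); try lra.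
  - intros j Hj. specialize (Ha j Hj). lra.
  - intros j Hj. specialize (Hta j Hj). lra.
  - intros j Hj. specialize (Hb j Hj). lra.
  - intros j Hj. specialize (Htb j Hj). lra.
  - exists (mir l). split; [apply vd_mir_inv; auto|]. split; [apply vd_mir_inv; auto|]. split.
    + intros i Hi. rewrite U_mir. specialize (E2 i Hi).
      replace (- U l (- b i) - tb i) with (- (U l (- b i) - - tb i)) by ring. rewrite Rabs_Ropp. auto.
    + intros j Hj. rewrite U_mir. specialize (E1 j Hj).
      replace (- U l (- a j) - ta j) with (- (U l (- a j) - - ta j)) by ring. rewrite Rabs_Ropp. auto.
Qed.

Lemma Cl_base : Cl 0 0.
Proof.
  intros b tb a ta eta Hb0 Hb Htb0 Htb Ha0 Ha Hta0 Hta Heta.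
  destruct (adjust (b O) (tb O) 1 (- a O) (eta / 2)) as (F1 & V1 & E1 & _ & N1); try lra.
  destruct (N1 (a O) ltac:(lra)) as [Va _].
  set (y := U F1 (a O)).
  assert (Hy : y < 0) by (apply U_neg; auto).
  destruct (adjust_neg y (ta O) 1 (tb O) (eta / 2)) as (F2 & V2 & E2 & _ & N2); try lra.
  destruct (N2 (tb O) ltac:(lra)) as [Vt Dt].
  exists (F2 ++ F1). split; [|split; [|split]].
  - apply vd_app_U; auto. rewrite E1. auto.
  - apply vd_app_U; auto.
  - intros i Hi. assert (i = O) by lia. subst. rewrite U_app, E1. lra.
  - intros j Hj. assert (j = O) by lia. subst. rewrite U_app. fold y. rewrite E2, Rminus_diag, Rabs_R0. lra.
Qed.


Lemma Cl_step n m : Cl n m -> Cl (S n) m.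
Proof.
  intros IH b tb a ta eta Hb0 Hb Htb0 Htb Ha0 Ha Hta0 Hta Heta.
  assert (Hb01 : b O < b 1%nat) by (apply Hb; lia).
  assert (Htb01 : tb O < tb 1%nat) by (apply Htb; lia).
  set (eta1 := Rmin (eta / 4) ((tb 1%nat - tb O) / 4)).
  assert (He1 : 0 < eta1) by (apply Rmin_pos; lra).
  assert (He1a : eta1 <= eta / 4) by apply Rmin_l.
  assert (He1b : eta1 <= (tb 1%nat - tb O) / 4) by apply Rmin_r.
  destruct (IH (fun i => b (S i)) (fun i => tb (S i)) a ta eta1) as (l1 & V1b & V1a & E1b & E1a);
    auto; try lra.
  { intros i Hi. apply Hb. lia. }
  { intros i Hi. apply Htb. lia. }
  cbv beta in V1b, E1b.
  assert (Hbi : forall i, (1 <= i <= S n)%nat -> b 1%nat <= b i).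
  { intros i Hi. apply (chain_le b (S n) Hb); lia. }
  assert (Haj : forall j, (j <= m)%nat -> a j <= a O).
  { intros j Hj. apply (chain_le_dec a m Ha); lia. }
  destruct (fin_min n (fun i d => forall v, Rabs (v - b (S i)) < d ->
       vd l1 (/ v) /\ Rabs (U l1 v - U l1 (b (S i))) < eta1)) as [rp [Hrp Prp]].
  { intros i d d' H Hd v Hv. apply H. lra. }
  { intros i Hi. apply U_cont; auto.
    - assert (b 1%nat <= b (S i)) by (apply Hbi; lia). lra.
    - apply (U_mono_pos_le l1 (b 1%nat)); auto; try lra. apply Hbi; lia. }
  destruct (fin_min m (fun j d => forall v, Rabs (v - a j) < d ->
       vd l1 (/ v) /\ Rabs (U l1 v - U l1 (a j)) < eta1)) as [rn [Hrn Prn]].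
  { intros i d d' H Hd v Hv. apply H. lra. }
  { intros j Hj. apply U_cont; auto.
    - assert (a j <= a O) by auto. lra.
    - apply (U_mono_neg_le l1 (a O)); auto. }
  set (r1 := Rmin rp rn).
  assert (Hr1 : 0 < r1) by (apply Rmin_pos; auto).
  assert (Hr1p : r1 <= rp) by apply Rmin_l.
  assert (Hr1n : r1 <= rn) by apply Rmin_r.
  (* P : move b 0 close to b 1 *)
  set (qP := Rmax (b O) (b 1%nat - r1 / 2)).
  assert (HqP1 : b O <= qP) by apply Rmax_l.
  assert (HqP2 : b 1%nat - r1 / 2 <= qP) by apply Rmax_r.
  assert (HqP3 : qP < b 1%nat).
  { unfold qP. apply Rmax_lub_lt; lra. }
  destruct (adjust (b O) qP (b 1%nat - qP) (- a O) (r1 / 2)) as (P & VP & EP & PP & PN); try lra.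
  rewrite Rmax_right in PP by lra.
  replace (qP + (b 1%nat - qP)) with (b 1%nat) in PP by ring.
  assert (PPi : forall i, (i <= n)%nat -> vd P (/ b (S i)) /\ Rabs (U P (b (S i)) - b (S i)) <= r1 / 2).
  { intros i Hi. apply PP. apply Hbi. lia. }
  assert (PNj : forall j, (j <= m)%nat -> vd P (/ a j) /\ Rabs (U P (a j) - a j) <= r1 / 2).
  { intros j Hj. apply PN. assert (a j <= a O) by auto. lra. }
  assert (Hq1 : vd l1 (/ qP)).
  { destruct (Prp O (le_0_n _) qP) as [H _]; auto. rewrite Rabs_left1 by lra. lra. }
  set (p := U l1 qP).
  assert (Hp : 0 < p) by (apply U_pos; auto; lra).
  assert (L1i : forall i, (i <= n)%nat -> vd l1 (/ U P (b (S i))) /\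
              Rabs (U l1 (U P (b (S i))) - U l1 (b (S i))) < eta1).
  { intros i Hi. destruct (PPi i Hi) as [_ D]. apply Prp; auto. lra. }
  assert (L1j : forall j, (j <= m)%nat -> vd l1 (/ U P (a j)) /\
              Rabs (U l1 (U P (a j)) - U l1 (a j)) < eta1).
  { intros j Hj. destruct (PNj j Hj) as [_ D]. apply Prn; auto. lra. }
  assert (HPb : forall i, (i <= n)%nat -> U P (b 1%nat) <= U P (b (S i))).
  { intros i Hi. apply (U_mono_pos_le P (b 1%nat)); [lra|apply Hbi; lia|]. apply (PPi O); lia. }
  assert (HPa : forall j, (j <= m)%nat -> U P (a j) <= U P (a O)).
  { intros j Hj. apply (U_mono_neg_le P (a O)); auto. apply (PNj O); lia. }
  assert (HPb1 : qP < U P (b 1%nat)).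
  { rewrite <- EP. apply U_mono_pos; auto. }
  assert (HPa0 : U P (a O) < 0) by (apply U_neg; auto; apply (PNj O); lia).
  set (r := U l1 (U P (b 1%nat))).
  assert (Hpr : p < r).
  { apply U_mono_pos; auto; lra. }
  assert (Hr_tb : tb O < r).
  { destruct (L1i O ltac:(lia)) as [_ D]. specialize (E1b O ltac:(lia)).
    apply Rabs_def2 in D. apply Rabs_def2 in E1b. fold r in D. lra. }
  assert (Hyi : forall i, (i <= n)%nat -> r <= U l1 (U P (b (S i)))).
  { intros i Hi. apply (U_mono_pos_le l1 (U P (b 1%nat))); [lra|apply HPb; auto|].
    apply (L1i O); lia. }
  set (al := - U l1 (U P (a O))).
  assert (Hal : 0 < al).
  { unfold al. assert (U l1 (U P (a O)) < 0) by (apply U_neg; auto; apply (L1j O); lia). lra. }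
  assert (Hyj : forall j, (j <= m)%nat -> U l1 (U P (a j)) <= - al).
  { intros j Hj. unfold al. rewrite Ropp_involutive. apply (U_mono_neg_le l1 (U P (a O))); auto.
    apply (L1j O); lia. }
  destruct (adjust p (tb O) (r - Rmax p (tb O)) al (eta / 4)) as (F & VF & EF & FP & FN); try lra.
  { unfold Rmax. destruct (Rle_dec p (tb O)); lra. }
  replace (Rmax p (tb O) + (r - Rmax p (tb O))) with r in FP by ring.
  exists (F ++ (l1 ++ P)). split; [|split; [|split]].
  - apply vd_app_U; [apply vd_app_U; auto; rewrite EP; auto|]. rewrite U_app, EP. fold p. auto.
  - apply vd_app_U; [apply vd_app_U; [apply (PNj O); lia| apply (L1j O); lia]|]. rewrite U_app.
    apply FN. apply Hyj. lia.
  - intros i Hi. destruct i as [|i].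
    + rewrite !U_app, EP. fold p. rewrite EF, Rminus_diag, Rabs_R0. lra.
    + rewrite !U_app. assert (Hi' : (i <= n)%nat) by lia.
      destruct (FP _ (Hyi i Hi')) as [_ D1].
      destruct (L1i i Hi') as [_ D2].
      specialize (E1b i Hi').
      set (y := U l1 (U P (b (S i)))) in *.
      replace (U F y - tb (S i)) with ((U F y - y) + (y - U l1 (b (S i))) + (U l1 (b (S i)) - tb (S i))) by ring.
      eapply Rle_lt_trans; [apply Rabs_triang|].
      eapply Rle_lt_trans; [apply Rplus_le_compat_r; apply Rabs_triang|]. lra.
  - intros j Hj. rewrite !U_app.
    destruct (FN _ (Hyj j Hj)) as [_ D1].
    destruct (L1j j Hj) as [_ D2].
    specialize (E1a j Hj).
    set (y := U l1 (U P (a j))) in *.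
    replace (U F y - ta j) with ((U F y - y) + (y - U l1 (a j)) + (U l1 (a j) - ta j)) by ring.
    eapply Rle_lt_trans; [apply Rabs_triang|].
    eapply Rle_lt_trans; [apply Rplus_le_compat_r; apply Rabs_triang|]. lra.
Qed.

Lemma Cl_all n m : Cl n m.
Proof.
  assert (H0 : forall n, Cl n 0).
  { intro k; induction k as [|k IHk]; [exact Cl_base|exact (Cl_step _ _ IHk)]. }
  assert (H1 : forall m, Cl 0 m) by (intro k; exact (Cl_sym _ _ (H0 k))).
  revert m. induction n; intro m; [exact (H1 m)|exact (Cl_step _ _ (IHn m))].
Qed.


Lemma locate (f : nat -> R) x : forall k, f (S k) <= x -> x <= f O ->
  exists i, (i <= k)%nat /\ f (S i) <= x <= f i.
Proof.
  induction k as [|k IH]; intros H1 H2.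
  - exists O. split; [lia|lra].
  - destruct (Rle_lt_dec x (f (S k))) as [H|H].
    + exists (S k). split; [lia|lra].
    + destruct IH as [i [Hi Hx]]; [lra|auto|]. exists i. split; [lia|auto].
Qed.

Lemma inv_err U t tau eta eps : 0 < eps -> 0 < tau -> tau <= Rabs t -> Rabs (U - t) < eta ->
  eta <= tau / 2 -> eta <= eps * tau^2 / 8 -> Rabs (/ U - / t) < eps / 4.
Proof.
  intros He Ht Htt HU H1 H2.
  assert (HUa : tau / 2 <= Rabs U).
  { assert (Rabs t <= Rabs U + Rabs (U - t)).
    { replace t with (U - (U - t)) at 1 by ring. eapply Rle_trans; [apply Rabs_triang|].
      rewrite Rabs_Ropp. lra. }
    lra. }
  assert (HU0 : U <> 0) by (intro E; rewrite E, Rabs_R0 in HUa; lra).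
  assert (Ht0 : t <> 0) by (intro E; rewrite E, Rabs_R0 in Htt; lra).
  replace (/ U - / t) with ((t - U) / (U * t)) by (field; auto).
  unfold Rdiv. rewrite Rabs_mult, Rabs_inv, Rabs_mult.
  rewrite <- Rabs_Ropp. replace (- (t - U)) with (U - t) by ring.
  apply (Rmult_lt_reg_r (Rabs U * Rabs t)). nra.
  rewrite Rmult_assoc, Rinv_l by nra. rewrite Rmult_1_r.
  assert (eps / 4 * (tau / 2 * tau) <= eps / 4 * (Rabs U * Rabs t)).
  { apply Rmult_le_compat_l. lra. apply Rmult_le_compat; lra. }
  lra.
Qed.

Theorem lemma3p15 (K : R -> Prop) (h : R -> R) (eps : R) :
  compact K ->
  continuity h ->
  (forall x y, x < y -> h x < h y) ->
  h 0 = 0 ->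
  0 < eps ->
  exists phi : R -> R, in_AF K phi /\
    exists d, d < eps /\ forall x, K x -> Rabs (phi x - h x) <= d.
Proof.
  intros HK Hh Hmono H0 Heps.
  assert (Hle : forall x y, x <= y -> h x <= h y).
  { intros x y Hxy. destruct (Req_dec x y) as [->|]; [lra|]. left. apply Hmono. lra. }
  destruct (compact_P1 K HK) as [m0 [M0 HM0]].
  set (M := Rmax 1 (Rmax (Rabs m0) (Rabs M0))).
  assert (HM1 : 1 <= M) by apply Rmax_l.
  assert (HKM : forall x, K x -> - M <= x <= M).
  { intros x Kx. destruct (HM0 x Kx).
    assert (Rabs m0 <= M) by (eapply Rle_trans; [apply Rmax_l|apply Rmax_r]).
    assert (Rabs M0 <= M) by (eapply Rle_trans; [apply Rmax_r|apply Rmax_r]).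
    pose proof (Rle_abs M0). pose proof (Rle_abs (- m0)). rewrite Rabs_Ropp in *. lra. }
  destruct (cpt_ed h 0 (Hh 0) (eps / 4) ltac:(lra)) as [d0 [Hd0 Hd0h]].
  set (dl := Rmin (d0 / 2) (M / 2)).
  assert (Hdl0 : 0 < dl) by (apply Rmin_pos; lra).
  assert (Hdl1 : dl <= d0 / 2) by apply Rmin_l.
  assert (Hdl2 : dl <= M / 2) by apply Rmin_r.
  assert (Hhd : h dl < eps / 4).
  { assert (Rabs (h dl - h 0) < eps / 4) by (apply Hd0h; rewrite Rminus_0_r, Rabs_pos_eq; lra).
    rewrite H0, Rminus_0_r in H. apply Rabs_def2 in H. lra. }
  assert (Hhmd : - (eps / 4) < h (- dl)).
  { assert (Rabs (h (- dl) - h 0) < eps / 4) by (apply Hd0h; rewrite Rminus_0_r, Rabs_Ropp, Rabs_pos_eq; lra).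
    rewrite H0, Rminus_0_r in H. apply Rabs_def2 in H. lra. }
  destruct (Heine h (fun c => - M <= c <= M) (compact_P3 (- M) M) (fun x _ => Hh x)
     (mkposreal (eps / 4) ltac:(lra))) as [du Hdu]. simpl in Hdu.
  pose proof (cond_pos du) as Hdu0.
  destruct (INR_unbounded ((M - dl) / du)) as [N HN].
  assert (HNr : 0 < INR N).
  { assert (0 < (M - dl) / du) by (apply Rdiv_lt_0_compat; lra). lra. }
  set (st := (M - dl) / INR N).
  assert (Hst0 : 0 < st) by (apply Rdiv_lt_0_compat; lra).
  assert (Hstu : st < du).
  { unfold st. apply (Rmult_lt_reg_r (INR N)); auto. unfold Rdiv. rewrite Rmult_assoc, Rinv_l by lra.
    apply (Rmult_lt_reg_r (/ du)). apply Rinv_0_lt_compat; lra.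
    replace (du * INR N * / du) with (INR N) by (field; lra). lra. }
  set (xg := fun i : nat => M - INR i * st).
  assert (Hxg0 : xg O = M) by (unfold xg; simpl; ring).
  assert (HxgN : xg N = dl) by (unfold xg, st; field; lra).
  assert (HxgS : forall i, xg (S i) = xg i - st) by (intro i; unfold xg; rewrite S_INR; ring).
  assert (Hxgr : forall i, (i <= N)%nat -> dl <= xg i <= M).
  { intros i Hi. assert (INR i <= INR N) by (apply le_INR; auto). pose proof (pos_INR i).
    unfold xg. split; [|nra]. assert (INR i * st <= INR N * st) by nra.
    assert (INR N * st = M - dl) by (unfold st; field; lra). lra. }
  set (b := fun i => / xg i). set (tb := fun i => / h (xg i)).
  set (a := fun i => / (- xg i)). set (ta := fun i => / h (- xg i)).
  assert (Hhp : forall x, 0 < x -> 0 < h x) by (intros x Hx; rewrite <- H0; apply Hmono; auto).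
  assert (Hhn : forall x, x < 0 -> h x < 0) by (intros x Hx; rewrite <- H0; apply Hmono; auto).
  set (tau := Rmin (/ h M) (/ (- h (- M)))).
  assert (HhM : 0 < h M) by (apply Hhp; lra).
  assert (HhmM : h (- M) < 0) by (apply Hhn; lra).
  assert (Htau : 0 < tau) by (apply Rmin_pos; apply Rinv_0_lt_compat; lra).
  set (eta := Rmin (tau / 2) (eps * tau^2 / 8)).
  assert (Heta : 0 < eta) by (apply Rmin_pos; [lra|]; apply Rmult_lt_0_compat; [|lra]; apply Rmult_lt_0_compat; nra).
  destruct (Cl_all N N b tb a ta eta) as (l & Vb & Va & Eb & Ea).
  { unfold b. rewrite Hxg0. apply Rinv_0_lt_compat. lra. }
  { intros i Hi. unfold b. rewrite HxgS. destruct (Hxgr (S i)); [lia|]. rewrite HxgS in *.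
    apply Rinv_lt_contravar; nra. }
  { unfold tb. rewrite Hxg0. apply Rinv_0_lt_compat. auto. }
  { intros i Hi. unfold tb. destruct (Hxgr (S i)); [lia|]. rewrite HxgS in *.
    assert (h (xg i - st) < h (xg i)) by (apply Hmono; lra).
    assert (0 < h (xg i - st)) by (apply Hhp; lra).
    apply Rinv_lt_contravar; nra. }
  { unfold a. rewrite Hxg0. apply Rinv_lt_0_compat. lra. }
  { intros i Hi. unfold a. destruct (Hxgr (S i)); [lia|]. rewrite HxgS in *.
    rewrite !Rinv_opp. apply Ropp_lt_contravar. apply Rinv_lt_contravar; nra. }
  { unfold ta. rewrite Hxg0. apply Rinv_lt_0_compat. auto. }
  { intros i Hi. unfold ta. destruct (Hxgr (S i)); [lia|]. rewrite HxgS in *.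
    assert (h (- xg i) < h (- (xg i - st))) by (apply Hmono; lra).
    assert (h (- (xg i - st)) < 0) by (apply Hhn; lra).
    apply Ropp_lt_cancel. rewrite <- !Rinv_opp. apply Rinv_lt_contravar; nra. }
  { exact Heta. }
  unfold b, a in Vb, Va. rewrite Hxg0, Rinv_inv in Vb. rewrite Hxg0, Rinv_inv in Va.
  assert (Vall : forall x, - M <= x <= M -> vd l x) by (intros x Hx; apply (interval l (- M) x M); auto).
  assert (Mon : forall x y, - M <= x -> x <= y -> y <= M -> ev l x <= ev l y).
  { intros x y Hx Hxy Hy. destruct (Req_dec x y) as [->|]; [lra|]. left. apply ev_strict; try apply Vall; lra. }
  assert (Gp : forall i, (i <= N)%nat -> Rabs (ev l (xg i) - h (xg i)) < eps / 4).
  { intros i Hi. specialize (Eb i Hi). unfold b, tb in Eb. destruct (Hxgr i Hi).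
    replace (ev l (xg i)) with (/ U l (/ xg i)) by (unfold U; rewrite !Rinv_inv; auto).
    rewrite <- (Rinv_inv (h (xg i))).
    apply (inv_err _ _ tau eta eps); auto; [|apply Rmin_l|apply Rmin_r].
    assert (0 < h (xg i)) by (apply Hhp; lra). assert (h (xg i) <= h M) by (apply Hle; lra).
    rewrite Rabs_pos_eq by (left; apply Rinv_0_lt_compat; auto).
    eapply Rle_trans; [apply Rmin_l|]. apply Rinv_le_contravar; auto. }
  assert (Gn : forall i, (i <= N)%nat -> Rabs (ev l (- xg i) - h (- xg i)) < eps / 4).
  { intros i Hi. specialize (Ea i Hi). unfold a, ta in Ea. destruct (Hxgr i Hi).
    replace (ev l (- xg i)) with (/ U l (/ - xg i)) by (unfold U; rewrite !Rinv_inv; auto).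
    rewrite <- (Rinv_inv (h (- xg i))).
    apply (inv_err _ _ tau eta eps); auto; [|apply Rmin_l|apply Rmin_r].
    assert (h (- xg i) < 0) by (apply Hhn; lra). assert (h (- M) <= h (- xg i)) by (apply Hle; lra).
    rewrite Rabs_left by (apply Rinv_lt_0_compat; auto). rewrite <- Rinv_opp.
    eapply Rle_trans; [apply Rmin_r|]. apply Rinv_le_contravar; lra. }
  assert (Hunif : forall i, (i < N)%nat -> h (xg i) - h (xg (S i)) < eps / 4 /\ h (- xg (S i)) - h (- xg i) < eps / 4).
  { intros i Hi. destruct (Hxgr i ltac:(lia)). destruct (Hxgr (S i) ltac:(lia)). rewrite HxgS in *.
    split.
    - assert (HH : Rabs (h (xg i) - h (xg i - st)) < eps / 4).
      { apply Hdu; try lra. replace (xg i - (xg i - st)) with st by ring. rewrite Rabs_pos_eq; lra. }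
      apply Rabs_def2 in HH. lra.
    - assert (HH : Rabs (h (- (xg i - st)) - h (- xg i)) < eps / 4).
      { apply Hdu; try lra. replace (- (xg i - st) - - xg i) with st by ring. rewrite Rabs_pos_eq; lra. }
      apply Rabs_def2 in HH. lra. }
  exists (ev l). split.
  { apply (inAF_ev K l (- M) M); auto; lra. }
  exists (eps / 2). split; [lra|].
  intros x Kx. destruct (HKM x Kx) as [Hx1 Hx2].
  assert (E0 : ev l 0 = 0) by apply ev_0.
  destruct (Rle_lt_dec dl x) as [Hx|Hx]; [|destruct (Rle_lt_dec 0 x) as [Hx'|Hx'];
      [|destruct (Rle_lt_dec (- dl) x) as [Hx''|Hx'']]].
  -
    destruct (N) as [|N'] eqn:EN; [simpl in HNr; lra|].
    destruct (locate xg x N') as [i [Hi [Hxa Hxb]]].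
    { rewrite HxgN. lra. } { rewrite Hxg0. lra. }
    destruct (Hxgr i ltac:(lia)). destruct (Hxgr (S i) ltac:(lia)).
    assert (ev l (xg (S i)) <= ev l x <= ev l (xg i)) by (split; apply Mon; lra).
    assert (h (xg (S i)) <= h x <= h (xg i)) by (split; apply Hle; lra).
    destruct (Hunif i ltac:(lia)) as [U1 _].
    pose proof (Gp i ltac:(lia)) as G1. pose proof (Gp (S i) ltac:(lia)) as G2.
    apply Rabs_def2 in G1. apply Rabs_def2 in G2.
    apply Rabs_le. lra.
  -
    assert (ev l 0 <= ev l x <= ev l dl) by (split; apply Mon; lra).
    assert (h 0 <= h x <= h dl) by (split; apply Hle; lra).
    pose proof (Gp N (le_n _)) as G. rewrite HxgN in G. apply Rabs_def2 in G.
    apply Rabs_le. lra.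
  -
    assert (ev l (- dl) <= ev l x <= ev l 0) by (split; apply Mon; lra).
    assert (h (- dl) <= h x <= h 0) by (split; apply Hle; lra).
    pose proof (Gn N (le_n _)) as G. rewrite HxgN in G. apply Rabs_def2 in G.
    apply Rabs_le. lra.
  -
    destruct (N) as [|N'] eqn:EN; [simpl in HNr; lra|].
    destruct (locate xg (- x) N') as [i [Hi [Hxa Hxb]]].
    { rewrite HxgN. lra. } { rewrite Hxg0. lra. }
    destruct (Hxgr i ltac:(lia)). destruct (Hxgr (S i) ltac:(lia)).
    assert (ev l (- xg i) <= ev l x <= ev l (- xg (S i))) by (split; apply Mon; lra).
    assert (h (- xg i) <= h x <= h (- xg (S i))) by (split; apply Hle; lra).
    destruct (Hunif i ltac:(lia)) as [_ U2].
    pose proof (Gn i ltac:(lia)) as G1. pose proof (Gn (S i) ltac:(lia)) as G2.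
    apply Rabs_def2 in G1. apply Rabs_def2 in G2.
    apply Rabs_le. lra.
Qed.
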